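(* Let $\{x^k\}_k$, $\{z^k\}_k$ be generated by the normal map-based stochastic proximal gradient method described in the context. Then for all integers $0\le m<n$ and every sample $\omega$ with $L(\omega)<\infty$ (for $L(\omega)=\infty$ the right-hand sides below are interpreted as $+\infty$), \[ d_{m,n}\le\max_{m<i\le n}\|z^i-z^m\|\le(1+\tau_{m,n}\bar\tau_{m,n})\big[\tau_{m,n}\|F^\lambda_{\mathrm{nor}}(z^m)\|+s_{m,n}\big], \] \[ \|e^{m,n}\|\le\bar\tau_{m,n}\tau_{m,n}^2\|F^\lambda_{\mathrm{nor}}(z^m)\|+(1+\bar\tau_{m,n}\tau_{m,n})s_{m,n}. \]
   Context: Let $\varphi:\mathbb{R}^d\to(-\infty,\infty]$ be convex, lower semicontinuous and proper, let $f:\mathbb{R}^d\to\mathbb{R}$ be continuously differentiable on an open set containing $\mathrm{dom}\,\varphi$, and set $\psi=f+\varphi$. For $\lambda>0$ let $\mathrm{prox}_{\lambda\varphi}(x)=\operatorname{argmin}_y\{\varphi(y)+\frac{1}{2\lambda}\|x-y\|^2\}$, $\mathrm{env}_{\lambda\varphi}(x)=\min_y\{\varphi(y)+\frac1{2\lambda}\|x-y\|^2\}$ (so $\nabla\mathrm{env}_{\lambda\varphi}(x)=(x-\mathrm{prox}_{\lambda\varphi}(x))/\lambda$), and define the normal map $F^\lambda_{\mathrm{nor}}(z)=\nabla f(\mathrm{prox}_{\lambda\varphi}(z))+\frac1\lambda(z-\mathrm{prox}_{\lambda\varphi}(z))$. Method: on a filtered probability space $(\Omega,\mathcal F,\{\mathcal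 F_k\}_k,\mathbb P)$, with $\lambda>0$, step sizes $\{\alpha_k\}_k\subset(0,\infty)$, deterministic $z^0$, $x^0=\mathrm{prox}_{\lambda\varphi}(z^0)$, and $\mathcal F_{k+1}$-measurable random vectors $g^k$, set $z^{k+1}=z^k-\alpha_k(g^k+\nabla\mathrm{env}_{\lambda\varphi}(z^k))$, $x^{k+1}=\mathrm{prox}_{\lambda\varphi}(z^{k+1})$, $k=0,1,\dots$. Let $e^k=g^k-\nabla f(x^k)$. Trajectory Lipschitz modulus: $L(\omega)=\sup_{\bar x\in\mathrm{cl}(\mathrm{conv}\{x^k(\omega)\}_k)}\mathrm{lip}\,\nabla f(\bar x)$, where $\mathrm{lip}\,\nabla f(\bar x)=\limsup_{x,x'\to\bar x,\,x\ne x'}\|\nabla f(x)-\nabla f(x')\|/\|x-x'\|$. Notation: $\tau_{m,n}=\sum_{i=m}^{n-1}\alpha_i$; $\bar\tau_{m,n}=(L+\frac2\lambda)\exp((L+\frac2\lambda)\tau_{m,n})$; $s_{m,n}=\max_{m<j\le n}\|\sum_{i=m}^{j-1}\alpha_ie^i\|$; $d_{m,n}=\max_{m<i\le n}\|x^i-x^m\|$; $e^{m,n}=-\sum_{i=m}^{n-1}\alpha_i[F^\lambda_{\mathrm{nor}}(z^i)-F^\lambda_{\mathrm{nor}}(z^m)]-\sum_{i=m}^{n-1}\alpha_ie^i$ (so that $z^n=z^m-\tau_{m,n}F^\lambda_{\mathrm{nor}}(z^m)+e^{m,n}$). *)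

(* Defs.v *)
From mathcomp Require Import all_boot all_order all_algebra.
From mathcomp Require Import all_classical all_reals all_analysis.
Set Implicit Arguments. Unset Strict Implicit. Unset Printing Implicit Defensive.
Import Order.TTheory GRing.Theory Num.Theory.
Local Open Scope ring_scope.
Local Open Scope classical_set_scope.

Section Defs.
Variables (R : realType) (d : nat).
Notation V := 'rV[R]_d.

Definition dotv (u v : V) : R := \sum_(i < d) u ord0 i * v ord0 i.
Definition enorm (v : V) : R := Num.sqrt (dotv v v).

Definition domf (phi : V -> \bar R) : set V := [set x | (phi x < +oo)%E].

Definition convex_efun (phi : V -> \bar R) : Prop :=
  forall (x y : V) (t : R), 0 < t < 1 ->
    (phi (t *: x + (1 - t) *: y)%R <= t%:E * phi x + (1 - t)%:E * phi y)%E.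

Definition lsc_efun (phi : V -> \bar R) : Prop :=
  forall (x : V) (a : \bar R), (a < phi x)%E ->
    exists2 eps : R, 0 < eps & forall y : V, enorm (y - x) < eps -> (a < phi y)%E.

Definition proper_efun (phi : V -> \bar R) : Prop :=
  (forall x, phi x != -oo%E) /\ exists x, (phi x < +oo)%E.

Definition open_e (U : set V) : Prop :=
  forall x, U x -> exists2 eps : R, 0 < eps & forall y, enorm (y - x) < eps -> U y.

Definition is_grad (f : V -> R) (g : V) (x : V) : Prop :=
  forall eps : R, 0 < eps -> exists2 del : R, 0 < del & forall y : V,
    enorm (y - x) < del -> `|f y - f x - dotv g (y - x)| <= eps * enorm (y - x).

Definition C1_on_open_nbhd_of_dom (f : V -> R) (gf : V -> V) (phi : V -> \bar R)
  : Prop :=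
  exists U : set V, [/\ open_e U, domf phi `<=` U,
    (forall x, U x -> is_grad f (gf x) x) &
    (forall x, U x -> forall eps : R, 0 < eps -> exists2 del : R, 0 < del &
       forall y, U y -> enorm (y - x) < del -> enorm (gf y - gf x) < eps)].

Definition is_prox (phi : V -> \bar R) (lam : R) (p : V -> V) : Prop :=
  forall x y : V,
    (phi (p x) + (enorm (x - p x) ^+ 2 / (2 * lam))%:E
       <= phi y + (enorm (x - y) ^+ 2 / (2 * lam))%:E)%E.

(* gradient of the Moreau envelope, (x - prox x)/lam *)
Definition genv (p : V -> V) (lam : R) (x : V) : V := lam^-1 *: (x - p x).

Definition Fnor (gf : V -> V) (p : V -> V) (lam : R) (z : V) : V :=
  gf (p z) + genv p lam z.

(* lip gf xb = limsup_{x,x' -> xb, x <> x'} |gf x - gf x'| / |x - x'| *)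
Definition lipg (gf : V -> V) (xb : V) : \bar R :=
  ereal_inf [set ereal_sup [set ((enorm (gf xx.1 - gf xx.2) / enorm (xx.1 - xx.2))%:E)
                           | xx in [set xx : V * V | xx.1 != xx.2 /\
                              enorm (xx.1 - xb) < del /\ enorm (xx.2 - xb) < del]]
            | del in [set del : R | 0 < del]].

Definition conv_seq (x : nat -> V) : set V :=
  [set y | exists (N : nat) (w : nat -> R),
     [/\ (forall k, 0 <= w k), \sum_(0 <= k < N) w k = 1 &
         y = \sum_(0 <= k < N) w k *: x k]].

Definition eclosure (A : set V) : set V :=
  [set y | forall eps : R, 0 < eps -> exists2 a, A a & enorm (a - y) < eps].

Definition traj_lip (gf : V -> V) (x : nat -> V) : \bar R :=
  ereal_sup [set lipg gf xb | xb in eclosure (conv_seq x)].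

Definition tau (alpha : nat -> R) (m n : nat) : R := \sum_(m <= i < n) alpha i.

Definition taubar (L lam : R) (alpha : nat -> R) (m n : nat) : R :=
  (L + 2 / lam) * expR ((L + 2 / lam) * tau alpha m n).

Definition smn (alpha : nat -> R) (e : nat -> V) (m n : nat) : R :=
  \big[Num.max/0]_(m.+1 <= j < n.+1) enorm (\sum_(m <= i < j) alpha i *: e i).

(* max_{m < i <= n} |w^i - w^m| ; d_{m,n} is this with w = x *)
Definition maxdist (w : nat -> V) (m n : nat) : R :=
  \big[Num.max/0]_(m.+1 <= i < n.+1) enorm (w i - w m).

Definition emn (F : V -> V) (alpha : nat -> R) (z e : nat -> V) (m n : nat) : V :=
  - (\sum_(m <= i < n) alpha i *: (F (z i) - F (z m)))
  - \sum_(m <= i < n) alpha i *: e i.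

End Defs.

(* Main.v *)
Require Import Defs.
From mathcomp Require Import all_boot all_order all_algebra.
From mathcomp Require Import all_classical all_reals all_analysis.
Import Order.TTheory GRing.Theory Num.Theory.
Local Open Scope ring_scope.
From mathcomp Require Import ring lra.

Section Part1.
Set Implicit Arguments. Unset Strict Implicit.

Section Norm.
Variables (R : realType) (d : nat).
Notation V := 'rV[R]_d.
Implicit Types u v w : V.

Lemma dotvC u v : dotv u v = dotv v u.
Proof. by apply: eq_bigr => i _; rewrite mulrC. Qed.
Lemma dotvDl u v w : dotv (u + v) w = dotv u w + dotv v w.
Proof. by rewrite /dotv -big_split; apply: eq_bigr => i _; rewrite mxE mulrDl. Qed.
Lemma dotvZl a u w : dotv (a *: u) w = a * dotv u w.
Proof. by rewrite /dotv mulr_sumr; apply: eq_bigr => i _; rewrite mxE mulrA. Qed.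
Lemma dotvNl u w : dotv (- u) w = - dotv u w.
Proof. by rewrite -scaleN1r dotvZl mulN1r. Qed.
Lemma dotvBl u v w : dotv (u - v) w = dotv u w - dotv v w.
Proof. by rewrite dotvDl dotvNl. Qed.
Lemma dotvDr u v w : dotv w (u + v) = dotv w u + dotv w v.
Proof. by rewrite dotvC dotvDl !(dotvC w). Qed.
Lemma dotvZr a u w : dotv w (a *: u) = a * dotv w u.
Proof. by rewrite dotvC dotvZl dotvC. Qed.
Lemma dotvBr u v w : dotv w (u - v) = dotv w u - dotv w v.
Proof. by rewrite dotvC dotvBl !(dotvC w). Qed.
Lemma dotv_ge0 u : 0 <= dotv u u.
Proof. by apply: sumr_ge0 => i _; rewrite -expr2 sqr_ge0. Qed.

Lemma enorm_ge0 u : 0 <= enorm u.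
Proof. exact: sqrtr_ge0. Qed.
Lemma enorm_sq u : enorm u ^+ 2 = dotv u u.
Proof. by rewrite sqr_sqrtr // dotv_ge0. Qed.

Lemma CS_sq u v : dotv u v ^+ 2 <= dotv u u * dotv v v.
Proof.
set a := dotv u u; set b := dotv u v; set c := dotv v v.
have H t : 0 <= a - 2 * t * b + t ^+ 2 * c.
  have := dotv_ge0 (u - t *: v).
  rewrite !(dotvBl, dotvBr, dotvZl, dotvZr) (dotvC v u) -/a -/b -/c.
  move=> h; apply: le_trans h _; rewrite le_eqVlt; apply/orP; left; apply/eqP; ring.
have c0 : 0 <= c by exact: dotv_ge0.
have a0 : 0 <= a by exact: dotv_ge0.
case: (ltrP 0 c) => hc.
  have h := H (b / c).
  have h2 : 0 <= (a - 2 * (b / c) * b + (b / c) ^+ 2 * c) * c by rewrite mulr_ge0 // ltW.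
  have E : (a - 2 * (b / c) * b + (b / c) ^+ 2 * c) * c = a * c - b ^+ 2.
    by field; rewrite gt_eqF.
  rewrite E in h2.
  by rewrite -subr_ge0.
have c00 : c = 0 by apply/eqP; rewrite eq_le hc c0.
case: (eqVneq b 0) => hb; first by rewrite hb expr0n /= mulr_ge0.
have := H ((a + 1) / (2 * b)); rewrite c00 mulr0 addr0.
have -> : 2 * ((a + 1) / (2 * b)) * b = a + 1 by field; rewrite hb.
lra.
Qed.

Lemma CS u v : `|dotv u v| <= enorm u * enorm v.
Proof.
rewrite /enorm -sqrtrM ?dotv_ge0 // -sqrtr_sqr ler_sqrt; last by rewrite mulr_ge0 ?dotv_ge0.
exact: CS_sq.
Qed.
Lemma CS' u v : dotv u v <= enorm u * enorm v.
Proof. exact: le_trans (ler_norm _) (CS u v). Qed.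

Lemma enorm_le u v : dotv u u <= dotv v v -> enorm u <= enorm v.
Proof. by move=> h; rewrite /enorm ler_sqrt // dotv_ge0. Qed.

Lemma enormD u v : enorm (u + v) <= enorm u + enorm v.
Proof.
have -> : enorm u + enorm v = Num.sqrt ((enorm u + enorm v) ^+ 2).
  by rewrite sqrtr_sqr ger0_norm // addr_ge0 // enorm_ge0.
rewrite {1}/enorm ler_sqrt ?sqr_ge0 //.
rewrite dotvDl !dotvDr (dotvC v u) -!enorm_sq.
have := CS' u v; have := enorm_ge0 u; have := enorm_ge0 v. nra.
Qed.

Lemma enormZ a u : enorm (a *: u) = `|a| * enorm u.
Proof.
rewrite /enorm dotvZl dotvZr mulrA -expr2 sqrtrM ?sqr_ge0 // sqrtr_sqr //.
Qed.
Lemma enormN u : enorm (- u) = enorm u.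
Proof. by rewrite -scaleN1r enormZ normrN normr1 mul1r. Qed.
Lemma enormB u v : enorm (u - v) = enorm (v - u).
Proof. by rewrite -enormN opprB. Qed.
Lemma enorm0 : enorm (0 : V) = 0.
Proof. by rewrite -(scale0r (0:V)) enormZ normr0 mul0r. Qed.

Lemma enorm_sum (I : Type) (r : seq I) (P : pred I) (G : I -> V) :
  enorm (\sum_(i <- r | P i) G i) <= \sum_(i <- r | P i) enorm (G i).
Proof.
elim/big_rec2: _ => [|i y1 y2 _ h]; first by rewrite enorm0.
exact: le_trans (enormD _ _) (lerD (lexx _) h).
Qed.

End Norm.

End Part1.

Section Part2.
Set Implicit Arguments. Unset Strict Implicit.

Section Prox.
Variables (R : realType) (d : nat).
Notation V := 'rV[R]_d.
Variables (phi : V -> \bar R) (lam : R) (p : V -> V).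
Hypotheses (cvx : convex_efun phi) (prp : proper_efun phi) (lam0 : 0 < lam)
  (hp : is_prox phi lam p).

Lemma small_le0 (c Y : R) : 0 <= Y -> (forall t, 0 < t < 1 -> c <= t * Y) -> c <= 0.
Proof.
move=> Y0 H; rewrite leNgt; apply/negP => c0.
have t0 : 0 < c / (2 * (c + Y)) by rewrite divr_gt0 // mulr_gt0 // ltr_wpDr.
have cY : 0 < c + Y by rewrite ltr_wpDr.
have t1 : c / (2 * (c + Y)) < 1.
  by rewrite ltr_pdivrMr ?mulr_gt0 //; lra.
have := H _ (andb_true_intro (conj t0 t1)).
rewrite mulrAC ler_pdivlMr ?mulr_gt0 //; nra.
Qed.

Lemma fin_val y : (phi y < +oo)%E -> exists r, phi y = r%:E.
Proof.
case: prp => ninf _; have := ninf y; case: (phi y) => [r| |] //; by exists r.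
Qed.

Lemma prox_dom x : exists r, phi (p x) = r%:E.
Proof.
apply: fin_val; case: (prp) => _ [x0 hx0]; have [r0 e0] := fin_val hx0.
have := hp x x0; rewrite e0; case: (phi (p x)) => // r; by rewrite leNgt ltey_eq. 
Qed.

Lemma sqexp (w v : V) t : enorm (w - t *: v) ^+ 2 =
  enorm w ^+ 2 - 2 * t * dotv w v + t ^+ 2 * enorm v ^+ 2.
Proof.
rewrite !enorm_sq !(dotvBl, dotvBr, dotvZl, dotvZr) (dotvC v w); ring.
Qed.

Lemma prox_ineq x y a b : phi (p x) = a%:E -> phi y = b%:E ->
  lam * a + dotv (x - p x) (y - p x) <= lam * b.
Proof.
move=> ea eb; set q := p x.
set W := enorm (x - q) ^+ 2; set D := dotv (x - q) (y - q); set Y := enorm (y - q) ^+ 2.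
rewrite -subr_ge0 -oppr_le0.
apply: (@small_le0 _ (Y / 2)); first by rewrite divr_ge0 // sqr_ge0.
move=> t /andP [t0 t1].
have hc := cvx y q (andb_true_intro (conj t0 t1)).
have hq := hp x (t *: y + (1 - t) *: q).
rewrite eb ea -EFinM -EFinM -EFinD in hc.
have ex : x - (t *: y + (1 - t) *: q) = (x - q) - t *: (y - q).
  by apply/rowP => i; rewrite !mxE; ring.
rewrite ex sqexp -/W -/D -/Y ea in hq.
have := le_trans hq (leeD2r _ hc); rewrite -EFinD lee_fin => h.
have h2 : 2 * lam * (a + W / (2 * lam)) <=
          2 * lam * (t * b + (1 - t) * a + (W - 2 * t * D + t ^+ 2 * Y) / (2 * lam)).
  by rewrite ler_pM2l // mulr_gt0.
have E1 : 2 * lam * (a + W / (2 * lam)) = 2 * lam * a + W by field; rewrite gt_eqF.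
have E2 : 2 * lam * (t * b + (1 - t) * a + (W - 2 * t * D + t ^+ 2 * Y) / (2 * lam))
   = 2 * lam * (t * b + (1 - t) * a) + (W - 2 * t * D + t ^+ 2 * Y) by field; rewrite gt_eqF.
rewrite E1 E2 in h2.
have h3 : t * (2 * (lam * a + D - lam * b)) <= t * (t * Y) by lra.
rewrite ler_pM2l // in h3.
lra.
Qed.

Lemma prox_nonexp x1 x2 : enorm (p x1 - p x2) <= enorm (x1 - x2).
Proof.
have [a1 e1] := prox_dom x1; have [a2 e2] := prox_dom x2.
have h1 := prox_ineq e1 e2; have h2 := prox_ineq e2 e1.
set q1 := p x1 in h1 h2 *; set q2 := p x2 in h1 h2 *.
have hD : enorm (q1 - q2) ^+ 2 <= dotv (x1 - x2) (q1 - q2).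
  have E : dotv (x1 - q1) (q2 - q1) + dotv (x2 - q2) (q1 - q2)
     = enorm (q1 - q2) ^+ 2 - dotv (x1 - x2) (q1 - q2).
    rewrite enorm_sq !(dotvBl, dotvBr) (dotvC q2 q1); ring.
  lra.
have := le_trans hD (CS' _ _).
have := enorm_ge0 (q1 - q2); have := enorm_ge0 (x1 - x2); nra.
Qed.

End Prox.

End Part2.

Section Part3.
Set Implicit Arguments. Unset Strict Implicit.
Local Open Scope classical_set_scope.
Local Open Scope ring_scope.

Lemma sum_if (Z : zmodType) (G : nat -> Z) N i :
  \sum_(0 <= k < N) (if k == i then G k else 0) = if (i < N)%N then G i else 0.
Proof.
elim: N => [|N IH]; first by rewrite big_geq.
rewrite big_nat_recr //= IH ltnS.
case: (ltngtP i N) => h /=.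
- by rewrite addr0.
- by rewrite addr0.
- by rewrite h add0r.
Qed.

Section Lip.
Variables (R : realType) (d : nat).
Notation V := 'rV[R]_d.

Lemma enorm_eq0 (v : V) : enorm v = 0 -> v = 0.
Proof.
move=> /eqP; rewrite sqrtr_eq0 => h.
have h0 : dotv v v = 0 by apply/eqP; rewrite eq_le h dotv_ge0.
apply/rowP => j; rewrite mxE.
have := @psumr_eq0P _ _ predT (fun i => v ord0 i * v ord0 i) _ h0 j.
rewrite -expr2 => H; apply/eqP; rewrite -sqrf_eq0 H //.
by move=> i _; rewrite -expr2 sqr_ge0.
Qed.

Lemma enorm_gt0 (v : V) : v != 0 -> 0 < enorm v.
Proof.
move=> h; rewrite lt_neqAle enorm_ge0 andbT; apply/eqP => e.
by move/eqP: h; apply; apply: enorm_eq0.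
Qed.

Lemma segment_lip (G : V -> V) (a b : V) (M : R) : 0 <= M ->
  (forall s, 0 <= s <= 1 -> exists2 del, 0 < del & forall y1 y2,
     enorm (y1 - (b + s *: (a - b))) < del -> enorm (y2 - (b + s *: (a - b))) < del ->
     enorm (G y1 - G y2) <= M * enorm (y1 - y2)) ->
  enorm (G a - G b) <= M * enorm (a - b).
Proof.
move=> M0 Hl.
case: (eqVneq (a - b) 0) => hab.
  have -> : a = b by apply/eqP; rewrite -subr_eq0 hab.
  by rewrite !subrr !enorm0 mulr0.
set N := enorm (a - b).
have N0 : 0 < N by exact: enorm_gt0.
pose c s := b + s *: (a - b).
have dc s s' : enorm (c s - c s') = `|s - s'| * N.
  rewrite -enormZ; congr enorm; apply/rowP => i; rewrite !mxE; ring.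
pose P s := enorm (G (c s) - G b) <= M * s * N.
have P0 : P 0 by rewrite /P /c scale0r addr0 subrr enorm0 mulr0 mul0r.
pose A := [set t : R | 0 <= t <= 1 /\ forall s, 0 <= s <= t -> P s].
have A0 : A 0.
  split; first by rewrite lexx ler01.
  by move=> s /andP [h1 h2]; have -> : s = 0 by apply/eqP; rewrite eq_le h1 h2.
have hs : has_sup A.
  split; first by exists 0.
  by exists 1 => t [/andP [_ ?] _].
set T := sup A.
have T0 : 0 <= T by exact: sup_upper_bound.
have T1 : T <= 1 by apply: ge_sup; [exists 0 | move=> t [/andP [_ ?] _]].
have below s : 0 <= s < T -> P s.
  move=> /andP [s0 sT].
  have hTs : 0 < T - s by rewrite subr_gt0.
  have [t [_ Ht] ht] := sup_adherent hTs hs.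
  apply: Ht; rewrite s0 /=; apply: ltW; move: ht; rewrite -/T; lra.
have [del del0 Hd] := Hl T (andb_true_intro (conj T0 T1)).
set r := del / (2 * N).
have r0 : 0 < r by rewrite divr_gt0 // mulr_gt0.
have near s : `|s - T| <= r -> enorm (c s - c T) < del.
  move=> h; rewrite dc.
  apply: (le_lt_trans (ler_wpM2r (ltW N0) h)).
  have -> : r * N = del / 2 by rewrite /r; field; rewrite gt_eqF.
  lra.
have [s0 [hs0 hs0T hs0r Ps0]] : exists s0, [/\ 0 <= s0, s0 <= T, T - r <= s0 & P s0].
  case: (lerP (T - r) 0) => h.
    by exists 0; split => //; rewrite lexx.
  exists (T - r); split; [exact: ltW | lra | lra |].
  by apply: below; rewrite (ltW h) /=; lra.
have key t' : T <= t' <= 1 -> t' <= T + r -> A t'.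
  move=> /andP [h1 h2] h3; split; first by rewrite h2 (le_trans T0 h1).
  move=> s /andP [s0' st].
  case: (ltrP s s0) => hss.
    by apply: below; rewrite s0' /=; lra.
  rewrite /P.
  have n1 : enorm (c s - c T) < del by apply: near; rewrite ler_norml; lra.
  have n2 : enorm (c s0 - c T) < del by apply: near; rewrite ler_norml; lra.
  have := Hd _ _ n1 n2; rewrite dc => h.
  have -> : G (c s) - G b = (G (c s) - G (c s0)) + (G (c s0) - G b).
    by rewrite addrA subrK.
  apply: le_trans (enormD _ _) _.
  apply: le_trans (lerD h Ps0) _.
  rewrite ger0_norm; last lra.
  rewrite le_eqVlt; apply/orP; left; apply/eqP; ring.
case: (lerP (T + r) 1) => h.
  have k : A (T + r).
    by apply: key; [rewrite h andbT; lra | exact: lexx].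
  have := sup_upper_bound hs k; rewrite -/T => hh; exfalso; lra.
have [_ HP] := key 1 (andb_true_intro (conj T1 (lexx _))) (ltW h).
have := HP 1 (andb_true_intro (conj ler01 (lexx _))).
have c1 : c 1 = a by rewrite /c scale1r addrCA subrr addr0.
by rewrite /P c1 mulr1.
Qed.

End Lip.

End Part3.

Section Part4.
Set Implicit Arguments. Unset Strict Implicit.
Local Open Scope classical_set_scope.
Local Open Scope ring_scope.

Lemma eps_le (R : realType) (X Y N : R) : 0 <= N ->
  (forall eps, 0 < eps -> X <= Y + eps * N) -> X <= Y.
Proof.
move=> N0 H; rewrite leNgt; apply/negP => h.
have e0 : 0 < (X - Y) / (2 * (N + 1)) by rewrite divr_gt0 ?subr_gt0 // mulr_gt0 //; lra.
have := H _ e0.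
have : (X - Y) / (2 * (N + 1)) * N < X - Y.
  rewrite mulrAC ltr_pdivrMr ?mulr_gt0 //; try lra.
  have : 0 < X - Y by lra. nra.
lra.
Qed.

Section Traj.
Variables (R : realType) (d : nat).
Notation V := 'rV[R]_d.
Variables (gf : V -> V) (x : nat -> V).
Hypothesis TLfin : (traj_lip gf x < +oo)%E.
Let L := fine (traj_lip gf x).

Lemma TL_le : (traj_lip gf x <= L%:E)%E.
Proof. rewrite /L; move: TLfin; case: (traj_lip gf x) => [r| |] //= _; exact: leNye. Qed.

Lemma seg_mem i m s : 0 <= s <= 1 ->
  eclosure (conv_seq x) (x m + s *: (x i - x m)).
Proof.
move=> /andP [s0 s1] eps eps0; exists (x m + s *: (x i - x m)); last first.
  by rewrite subrr enorm0.
exists (maxn i m).+1, (fun k => (if k == i then s else 0) + (if k == m then 1 - s else 0)).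
have hi : (i < (maxn i m).+1)%N by rewrite ltnS leq_maxl.
have hm : (m < (maxn i m).+1)%N by rewrite ltnS leq_maxr.
split.
- by move=> k; case: (k == i); case: (k == m); rewrite /= ?addr0 ?add0r //; lra.
- by rewrite big_split /= !sum_if hi hm; ring.
- rewrite (eq_bigr (fun k => (if k == i then s *: x k else 0) + (if k == m then (1 - s) *: x k else 0))); last first.
    by move=> k _; case: (k == i); case: (k == m); rewrite ?scalerDl ?scale0r.
  rewrite big_split /= !sum_if hi hm.
  by apply/rowP => j; rewrite !mxE; ring.
Qed.

Lemma loc_lip c : eclosure (conv_seq x) c -> forall eps, 0 < eps ->
  exists2 del, 0 < del & forall y1 y2, enorm (y1 - c) < del -> enorm (y2 - c) < del ->
    enorm (gf y1 - gf y2) <= (L + eps) * enorm (y1 - y2).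
Proof.
move=> hc eps eps0.
have h1 : (lipg gf c <= traj_lip gf x)%E by apply: ereal_sup_ubound; exists c.
have h2 : (lipg gf c < (L + eps)%:E)%E.
  apply: le_lt_trans h1 (le_lt_trans TL_le _); rewrite lte_fin; lra.
have [y [del del0 <-] hy] := ereal_inf_lt h2.
exists del => // y1 y2 n1 n2.
case: (eqVneq y1 y2) => [->|hne]; first by rewrite !subrr !enorm0 mulr0.
have hle : ((enorm (gf y1 - gf y2) / enorm (y1 - y2))%:E <= 
   ereal_sup [set ((enorm (gf xx.1 - gf xx.2) / enorm (xx.1 - xx.2))%:E)
                           | xx in [set xx : V * V | xx.1 != xx.2 /\
                              (enorm (xx.1 - c) < del)%R /\ (enorm (xx.2 - c) < del)%R]])%E.
  by apply: ereal_sup_ubound; exists (y1, y2).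
have := le_lt_trans hle hy; rewrite lte_fin => h.
have np : 0 < enorm (y1 - y2) by apply: enorm_gt0; rewrite subr_eq0.
by rewrite -ler_pdivrMr // ltW.
Qed.

Lemma L_ge0 : 0 <= L.
Proof.
case: (pselect (exists u : V, u != 0)) => [[u hu]|nu].
  have hx0 : eclosure (conv_seq x) (x 0%N).
    by have := @seg_mem 0 0 0; rewrite scale0r addr0 lexx ler01; apply.
  have h0 : (0 <= lipg gf (x 0%N))%E.
    apply/ereal_infP => y [del del0 <-].
    have nu0 := enorm_gt0 hu.
    set k := del / (2 * enorm u).
    have k0 : 0 < k by rewrite divr_gt0 // mulr_gt0.
    apply: le_trans (ereal_sup_ubound _); last first.
      exists (x 0%N + k *: u, x 0%N) => //=.
      split; first by rewrite -subr_eq0 addrAC subrr add0r scaler_eq0 negb_or gt_eqF.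
      rewrite subrr enorm0 del0; split => //.
      rewrite addrAC subrr add0r enormZ gtr0_norm // /k.
      have -> : del / (2 * enorm u) * enorm u = del / 2 by field; rewrite gt_eqF.
      have dd : 0 < del := del0. lra.
    by rewrite lee_fin divr_ge0 // enorm_ge0.
  have h1 : (lipg gf (x 0%N) <= traj_lip gf x)%E by apply: ereal_sup_ubound; exists (x 0%N).
  have := le_trans h0 h1; rewrite /L; move: TLfin; case: (traj_lip gf x) => //.
have all0 (v : V) : v = 0 by apply: contrapT => hv; apply: nu; exists v; apply/eqP.
rewrite /L; suff -> : traj_lip gf x = -oo%E by [].
apply/eqP; rewrite eq_le leNye andbT; apply/ereal_supP => y [c _ <-].
apply: le_trans (ereal_inf_lbound _) _; first by exists 1 => //; exact: ltr01.
apply/ereal_supP => w [[y1 y2] [/= hne _] _].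
by move: hne; rewrite (all0 y1) (all0 y2) eqxx.
Qed.

Lemma traj_lipschitz i m : enorm (gf (x i) - gf (x m)) <= L * enorm (x i - x m).
Proof.
apply: (@eps_le _ _ _ (enorm (x i - x m))); first exact: enorm_ge0.
move=> eps eps0; rewrite -mulrDl.
apply: segment_lip; first by have := L_ge0; lra.
move=> s hs; exact: loc_lip (seg_mem i m hs) eps eps0.
Qed.

End Traj.

End Part4.

Section Part5.
Set Implicit Arguments. Unset Strict Implicit.

Section BM.
Variable R : realType.
Implicit Types F G : nat -> R.

Lemma bm_ge0 a b F : 0 <= \big[Num.max/0]_(a <= j < b) F j.
Proof. by elim/big_rec: _ => // i y _ h; rewrite le_max h orbT. Qed.

Lemma bm_ub a b F j : (a <= j < b)%N -> F j <= \big[Num.max/0]_(a <= j < b) F j.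
Proof.
move=> hj; have hj' : j \in index_iota a b by rewrite mem_index_iota.
exact: (le_bigmax_seq 0 j predT F hj' isT).
Qed.

Lemma bm_le a b F B : 0 <= B -> (forall j, (a <= j < b)%N -> F j <= B) ->
  \big[Num.max/0]_(a <= j < b) F j <= B.
Proof.
move=> B0 H; rewrite big_seq_cond.
elim/big_rec: _ => // i y /andP [hi _] h.
by rewrite ge_max h andbT; apply: H; rewrite -mem_index_iota.
Qed.
End BM.

Lemma lemM2l (R : numDomainType) (a b c : R) : 0 <= a -> b <= c -> a * b <= a * c.
Proof. by move=> h1 h2; rewrite -subr_ge0 -mulrBr mulr_ge0 // subr_ge0. Qed.
Lemma lemM2r (R : numDomainType) (a b c : R) : 0 <= a -> b <= c -> b * a <= c * a.
Proof. by move=> h1 h2; rewrite -!(mulrC a) lemM2l. Qed.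

Lemma tau_recr (R : realType) (alpha : nat -> R) m j : (m <= j)%N ->
  tau alpha m j.+1 = tau alpha m j + alpha j.
Proof. by move=> h; rewrite /tau big_nat_recr. Qed.

Lemma tau_ge0 (R : realType) (alpha : nat -> R) m j : (forall k, 0 < alpha k) ->
  0 <= tau alpha m j.
Proof. by move=> h; apply: sumr_ge0 => i _; apply: ltW. Qed.

Lemma tau_mono (R : realType) (alpha : nat -> R) m j n : (forall k, 0 < alpha k) ->
  (j <= n)%N -> tau alpha m j <= tau alpha m n.
Proof.
move=> h; elim: n => [|n IH]; first by rewrite leqn0 => /eqP ->.
rewrite leq_eqVlt => /orP [/eqP -> //| hj].
apply: le_trans (IH hj) _.
case: (leqP m n) => hmn.
  by rewrite tau_recr // lerDl ltW.
by rewrite /tau !big_geq // ltnW.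
Qed.

End Part5.

Theorem lemma2p7 (R : realType) (d : nat)
  (phi : 'rV[R]_d -> \bar R) (f : 'rV[R]_d -> R) (gf : 'rV[R]_d -> 'rV[R]_d)
  (lam : R) (p : 'rV[R]_d -> 'rV[R]_d) (alpha : nat -> R)
  (g z : nat -> 'rV[R]_d) :
  convex_efun phi -> lsc_efun phi -> proper_efun phi ->
  C1_on_open_nbhd_of_dom f gf phi ->
  0 < lam -> is_prox phi lam p ->
  (forall k, 0 < alpha k) ->
  (forall k, z k.+1 = z k - alpha k *: (g k + genv p lam (z k))) ->
  let x := fun k => p (z k) in
  let e := fun k => g k - gf (x k) in
  let F := Fnor gf p lam in
  (traj_lip gf x < +oo)%E ->
  let L := fine (traj_lip gf x) in
  forall m n : nat, (m < n)%N ->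
  let t := tau alpha m n in
  let tb := taubar L lam alpha m n in
  let s := smn alpha e m n in
  [/\ maxdist x m n <= maxdist z m n,
      maxdist z m n <= (1 + t * tb) * (t * enorm (F (z m)) + s) &
      enorm (emn F alpha z e m n) <= tb * t ^+ 2 * enorm (F (z m)) + (1 + tb * t) * s].
Proof.
move=> cvx _ prp _ lam0 hp a0 hz x e F TLfin L m n mn t tb s.
have L0 : 0 <= L := L_ge0 TLfin.
have hL i j : enorm (gf (x i) - gf (x j)) <= L * enorm (x i - x j) := traj_lipschitz TLfin i j.
have nex i j : enorm (x i - x j) <= enorm (z i - z j) := prox_nonexp cvx prp lam0 hp _ _.
set K := L + 2 / lam.
have K0 : 0 <= K by rewrite /K addr_ge0 // divr_ge0 // ltW.
have FL i j : enorm (F (z i) - F (z j)) <= K * enorm (z i - z j).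
  have -> : F (z i) - F (z j) = (gf (x i) - gf (x j)) + lam^-1 *: ((z i - z j) - (x i - x j)).
    by rewrite /F /Fnor /genv /x; apply/rowP => k; rewrite !mxE; ring.
  apply: le_trans (enormD _ _) _; rewrite enormZ ger0_norm; last by rewrite invr_ge0 ltW.
  have := enormD (z i - z j) (- (x i - x j)); rewrite enormN => h2.
  have := hL i j; have := nex i j; have := enorm_ge0 (x i - x j).
  have il : 0 < lam^-1 by rewrite invr_gt0.
  have -> : K * enorm (z i - z j) = L * enorm (z i - z j) + 2 * lam^-1 * enorm (z i - z j).
    by rewrite /K; ring.
  move=> h0 h1 h3.
  have := lemM2l L0 h1; have := lemM2l (ltW il) h2. nra.
have rec j : (m <= j)%N -> z j - z m = - (\sum_(m <= i < j) alpha i *: (F (z i) - F (z m)))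
    - tau alpha m j *: F (z m) - \sum_(m <= i < j) alpha i *: e i.
  elim: j => [|j IH] hj.
    by move: hj; rewrite leqn0 => /eqP ->; rewrite /tau !big_geq // subrr scale0r; apply/rowP => k; rewrite !mxE; ring.
  move: hj; rewrite leq_eqVlt => /orP [/eqP <-|]; first by
    rewrite /tau !big_geq // subrr scale0r; apply/rowP => k; rewrite !mxE; ring.
  rewrite ltnS => hmj; have {}IH := IH hmj.
  rewrite hz /tau !big_nat_recr //=.
  move: IH; rewrite /tau.
  move: (\sum_(m <= i < j) alpha i *: (F (z i) - F (z m))) (\sum_(m <= i < j) alpha i)
    (\sum_(m <= i < j) alpha i *: e i) => S1 T S2 IH.
  have E : z j = z m + (- S1 - T *: F (z m) - S2) by rewrite -IH addrC subrK.
  rewrite {1}E /e /F /Fnor /x.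
  by apply/rowP => k; rewrite !mxE; ring.
have s0 : 0 <= s by exact: bm_ge0.
have hs j : (m <= j <= n)%N -> enorm (\sum_(m <= i < j) alpha i *: e i) <= s.
  move=> /andP [hmj hjn]; move: hmj; rewrite leq_eqVlt => /orP [/eqP <-|hmj].
    by rewrite big_geq // enorm0.
  by apply: (bm_ub (fun j => enorm (\sum_(m <= i < j) alpha i *: e i))); rewrite hmj ltnS.
set A := t * enorm (F (z m)) + s.
have A0 : 0 <= A by rewrite /A addr_ge0 // mulr_ge0 ?enorm_ge0 ?tau_ge0.
have ub j : (m <= j <= n)%N ->
    enorm (z j - z m) <= A + K * \sum_(m <= i < j) alpha i * enorm (z i - z m).
  move=> hj; have /andP [hmj hjn] := hj; rewrite (rec j hmj).
  have h1 : enorm (\sum_(m <= i < j) alpha i *: (F (z i) - F (z m)))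
      <= K * \sum_(m <= i < j) alpha i * enorm (z i - z m).
    apply: le_trans (enorm_sum _ _ _) _; rewrite mulr_sumr; apply: ler_sum => i _.
    rewrite enormZ (ger0_norm (ltW (a0 i))) mulrCA; apply: lemM2l; [exact: ltW | exact: FL].
  have h2 : enorm (tau alpha m j *: F (z m)) <= t * enorm (F (z m)).
    rewrite enormZ (ger0_norm (tau_ge0 _ _ a0)); apply: lemM2r; [exact: enorm_ge0 | exact: tau_mono].
  have h3 := hs j hj.
  apply: le_trans (enormD _ _) _; rewrite enormN.
  apply: le_trans (lerD (enormD _ _) (lexx _)) _; rewrite enormN.
  rewrite /A !enormN; lra.
pose E j := expR (K * tau alpha m j).
have E0 j : 0 < E j by exact: expR_gt0.
have tel j : (m <= j)%N -> 1 + \sum_(m <= i < j) K * alpha i * E i <= E j.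
  move=> hmj.
  have h : \sum_(m <= i < j) K * alpha i * E i <= \sum_(m <= i < j) (E i.+1 - E i).
    rewrite !big_seq; apply: ler_sum => i; rewrite mem_index_iota => /andP [hi _].
    rewrite /E tau_recr // mulrDr expRD.
    have := expR_ge1Dx (K * alpha i); have := E0 i; rewrite /E => h0 h1.
    have := lemM2l (ltW h0) h1; lra.
  rewrite telescope_sumr // in h.
  have : E m = 1 by rewrite /E /tau big_geq // mulr0 expR0.
  lra.
have gr k : forall j, (m <= j <= m + k)%N -> (j <= n)%N -> enorm (z j - z m) <= A * E j.
  elim: k => [|k IH] j.
    rewrite addn0 -eqn_leq => /eqP <- _; rewrite subrr enorm0; exact: mulr_ge0 A0 (ltW (E0 m)).
  move=> /andP [hmj]; rewrite leq_eqVlt => /orP [/eqP hj|]; last first.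
    by rewrite addnS ltnS => hj; apply: IH; rewrite hmj.
  move=> hjn; apply: le_trans (ub j _) _; first by rewrite hmj.
  have h : \sum_(m <= i < j) alpha i * enorm (z i - z m) <= \sum_(m <= i < j) alpha i * (A * E i).
    rewrite !big_seq; apply: ler_sum => i; rewrite mem_index_iota => /andP [hi hij].
    apply: lemM2l (ltW (a0 i)) _; apply: IH.
      by rewrite hi /= -ltnS -addnS -hj.
    by apply: leq_trans hjn; apply: ltnW.
  apply: le_trans (lerD (lexx _) (lemM2l K0 h)) _.
  have -> : A + K * \sum_(m <= i < j) alpha i * (A * E i) = A * (1 + \sum_(m <= i < j) K * alpha i * E i).
    by rewrite mulrDr mulr1 !mulr_sumr; congr (_ + _); apply: eq_bigr => i _; ring.
  exact: lemM2l A0 (tel j hmj).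
have gr' j : (m <= j <= n)%N -> enorm (z j - z m) <= A * expR (K * t).
  move=> /andP [hmj hjn]; apply: le_trans (gr (j - m)%N j _ hjn) _.
    by rewrite (subnKC hmj) hmj leqnn.
  have HH : E j <= expR (K * t) by rewrite /E ler_expR; apply: lemM2l; [exact: K0 | exact: tau_mono]. 
  have := @lemM2l R A _ _ A0 HH. by [].
have Kt0 : 0 <= K * t by rewrite mulr_ge0 // tau_ge0.
have tbE : tb = K * expR (K * t) by [].
have expb : expR (K * t) <= 1 + t * tb.
  rewrite tbE; have := expR_ge1Dx (- (K * t)).
  have e1 : expR (- (K * t)) * expR (K * t) = 1 by rewrite -expRD addNr expR0.
  move=> h; have := lemM2r (ltW (expR_gt0 (K * t))) h; rewrite e1.
  have := expR_gt0 (K * t); nra.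
have hz2 : maxdist z m n <= (1 + t * tb) * A.
  apply: bm_le; first by rewrite mulr_ge0 // addr_ge0 // mulr_ge0 ?tau_ge0 // tbE mulr_ge0 // ltW // expR_gt0.
  move=> j /andP [hj1 hj2]; apply: le_trans (gr' j _) _; first by rewrite ltnW //= -ltnS.
  by rewrite [X in _ <= X]mulrC; apply: lemM2l A0 expb.
split => //.
- apply: bm_le; first exact: bm_ge0.
  move=> j hj; apply: le_trans (nex j m) _.
  exact: (bm_ub (fun j => enorm (z j - z m))).
- rewrite /emn.
  have h1 : enorm (\sum_(m <= i < n) alpha i *: (F (z i) - F (z m)))
      <= K * (t * (A * expR (K * t))).
    have ht : t = \sum_(m <= i < n) alpha i by [].
    apply: le_trans (enorm_sum _ _ _) _; rewrite {1}ht mulr_suml mulr_sumr.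
    rewrite !big_seq; apply: ler_sum => i; rewrite mem_index_iota => /andP [hi hin].
    rewrite enormZ (ger0_norm (ltW (a0 i))).
    apply: le_trans (lemM2l (ltW (a0 i)) (FL i m)) _.
    have := gr' i (andb_true_intro (conj hi (ltnW hin))).
    move=> h; have := lemM2l (ltW (a0 i)) (lemM2l K0 h).
    move=> h'; apply: le_trans h' _; rewrite le_eqVlt; apply/orP; left; apply/eqP; ring.
  have h3 := hs n (andb_true_intro (conj (ltnW mn) (leqnn n))).
  apply: le_trans (enormD _ _) _; rewrite !enormN.
  apply: le_trans (lerD h1 h3) _.
  rewrite tbE /A le_eqVlt; apply/orP; left; apply/eqP; ring.
Qed.
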